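(* Let $\psi_2$ be a finite pruned graph without half-loops such that every connected component of $\psi_2$ has positive order, and let $\psi_1$ be a proper subgraph of $\psi_2$. Then $\mathrm{ord}(\psi_1)<\mathrm{ord}(\psi_2)$.
   Context: Graphs may have multiple edges and whole-loops. The order of a graph is $\mathrm{ord}(\psi)=|E_\psi|-|V_\psi|$, with $E_\psi$ the undirected edges. A graph is pruned if every vertex has degree at least two (degree = number of directed edges with that tail; a whole-loop contributes two). *)

(* Defs.v *)
From mathcomp Require Import all_boot all_order all_algebra.
Set Implicit Arguments. Unset Strict Implicit. Unset Printing Implicit Defensive.
Import GRing.Theory Num.Theory.

(* A finite graph with multiple edges and whole-loops, but no half-loops:
   vertex set V, (undirected) edge set E, each edge e having two endpoints
   ends e = (a, b) (the orientation of the pair is irrelevant; a whole-loop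
   at v is an edge with ends e = (v, v)). Each undirected edge gives two
   directed edges, one with tail a and one with tail b. *)

Section Graphs.
Variables (V E : finType) (ends : E -> V * V).

(* degree = number of directed edges with tail v; a whole-loop counts twice *)
Definition deg (v : V) : nat :=
  #|[set e | (ends e).1 == v]| + #|[set e | (ends e).2 == v]|.

Definition pruned : Prop := forall v : V, 2 <= deg v.

Definition adj : rel V :=
  fun u w => [exists e, (ends e == (u, w)) || (ends e == (w, u))].

Definition component (v : V) : {set V} := [set w | connect adj v w].

Definition induced_order (C : {set V}) : int :=
  (#|[set e | ((ends e).1 \in C) && ((ends e).2 \in C)]|%:Z - #|C|%:Z)%R.

Definition graph_order : int := (#|E|%:Z - #|V|%:Z)%R.

Definition is_subgraph (VS : {set V}) (ES : {set E}) : Prop :=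
  forall e, e \in ES -> ((ends e).1 \in VS) && ((ends e).2 \in VS).

Definition sub_order (VS : {set V}) (ES : {set E}) : int :=
  (#|ES|%:Z - #|VS|%:Z)%R.

End Graphs.

(* Main.v *)
Require Import Defs.
From mathcomp Require Import all_boot all_order all_algebra.
From mathcomp Require Import zify.
Set Implicit Arguments. Unset Strict Implicit.
Import GRing.Theory Num.Theory.

Section Aux.
Variables (V E : finType) (ends : E -> V * V).

Definition cnt (S : {set V}) (e : E) : nat :=
  ((ends e).1 \in S) + ((ends e).2 \in S).

Lemma card_setE (T : finType) (b : pred T) : #|[set x | b x]| = \sum_x (b x : nat).
Proof.
rewrite cardsE -sum1_card big_mkcond /=; apply: eq_bigr => x _.
by rewrite unfold_in; case: (b x).
Qed.

Lemma sum_eq (S : {set V}) (x : V) : \sum_(v in S) ((x == v) : nat) = (x \in S).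
Proof.
case: (boolP (x \in S)) => Hx.
  rewrite (bigD1 x) //= eqxx big1 // => v /andP[_ Hv].
  by rewrite eq_sym (negbTE Hv).
rewrite big1 // => v Hv; case: eqP => // E0; subst; by rewrite Hv in Hx.
Qed.

Lemma sum_deg (S : {set V}) : \sum_(v in S) deg ends v = \sum_e cnt S e.
Proof.
rewrite /deg.
under eq_bigr do rewrite !card_setE -big_split /=.
rewrite exchange_big /=; apply: eq_bigr => e _.
by rewrite big_split /= !sum_eq.
Qed.

Lemma ltn_sum_ex (I : finType) (P : pred I) (f g : I -> nat) i :
  P i -> f i < g i -> (forall j, P j -> f j <= g j) ->
  \sum_(j | P j) f j < \sum_(j | P j) g j.
Proof.
move=> Pi Hi H; rewrite (bigD1 i) //= [X in _ < X](bigD1 i) //=.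
have : \sum_(j | P j && (j != i)) f j <= \sum_(j | P j && (j != i)) g j.
  by apply: leq_sum => j /andP[Pj _]; apply: H.
lia.
Qed.

End Aux.

Theorem theorem2p8 (V E : finType) (ends : E -> V * V) :
  pruned ends ->
  (forall v : V, (0 < induced_order ends (component ends v))%R) ->
  forall (VS : {set V}) (ES : {set E}),
    is_subgraph ends VS ES ->
    (VS != [set: V]) || (ES != [set: E]) ->
    (sub_order VS ES < @graph_order V E)%R.
Proof.
move=> Hpr Hcomp VS ES Hsub Hprop.
set W := ~: VS; set F := ~: ES.
suff HWF : #|W| < #|F|.
  rewrite /sub_order /graph_order.
  have HV := cardsC VS; have HE := cardsC ES.
  move: HV HE HWF; rewrite /W /F; lia.
have Hs := sum_deg ends W.
have HF0 : forall e, e \notin F -> cnt ends W e = 0.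
  move=> e; rewrite /F in_setC negbK => /Hsub /andP[h1 h2].
  by rewrite /cnt /W !in_setC h1 h2.
have HsF : \sum_e cnt ends W e = \sum_(e in F) cnt ends W e.
  rewrite [LHS](bigID (fun e => e \in F)) /= [X in _ + X = _]big1 ?addn0 // => e; apply: HF0.
have Hc2 : forall e, cnt ends W e <= 2.
  by move=> e; rewrite /cnt; case: (_ \in _); case: (_ \in _).
have H1 : \sum_(v in W) 2 <= \sum_(v in W) deg ends v.
  by apply: leq_sum => v _; apply: Hpr.
have H2 : \sum_(e in F) cnt ends W e <= \sum_(e in F) 2.
  by apply: leq_sum => e _; apply: Hc2.
rewrite !sum_nat_const in H1 H2.
case: (boolP [exists v in W, 2 < deg ends v]) => [/exists_inP[v Hv Hd]|Hd].
  have : \sum_(v in W) 2 < \sum_(v in W) deg ends v.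
    by apply: (ltn_sum_ex Hv) => // j _; apply: Hpr.
  rewrite sum_nat_const; lia.
case: (boolP [exists e in F, cnt ends W e < 2]) => [/exists_inP[e He Hc]|Hc].
  have : \sum_(e in F) cnt ends W e < \sum_(e in F) 2.
    by apply: (ltn_sum_ex He).
  rewrite sum_nat_const; lia.
have Hdeg : forall v, v \in W -> deg ends v <= 2.
  move=> v Hv; move/exists_inP: Hd => Hd.
  by rewrite leqNgt; apply/negP => h; apply: Hd; exists v.
have Hcnt : forall e, e \in F -> cnt ends W e = 2.
  move=> e He; move/exists_inP: Hc => Hc.
  have := Hc2 e; case: ltngtP => // h _; exfalso; apply: Hc; by exists e.
case: (set_0Vmem W) => [W0|[w Hw]].
  have HVS : VS = [set: V] by rewrite -(setCK VS) -/W W0 setC0.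
  rewrite HVS eqxx /= in Hprop.
  have : F != set0.
    by apply/negP => /eqP h; rewrite -(setCK ES) -/F h setC0 eqxx in Hprop.
  rewrite -card_gt0 W0 cards0; done.
exfalso.
have Hboth : forall e, ((ends e).1 \in W) || ((ends e).2 \in W) ->
    ((ends e).1 \in W) && ((ends e).2 \in W).
  move=> e Ho.
  have HeF : e \in F.
    case: (boolP (e \in F)) => // /HF0; rewrite /cnt.
    by case/orP: Ho => ->; case: (_ \in _).
  have := Hcnt e HeF; rewrite /cnt.
  by case: (_ \in _); case: (_ \in _).
have Hcl : closed (adj ends) W.
  move=> x y /existsP[e /orP[] /eqP He].
    have := Hboth e; rewrite He /=.
    by case: (x \in W); case: (y \in W) => //= /(_ isT).
  have := Hboth e; rewrite He /=.
  by case: (x \in W); case: (y \in W) => //= /(_ isT).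
set C := component ends w.
have HCW : forall v, v \in C -> v \in W.
  move=> v; rewrite inE => /(closed_connect Hcl); by rewrite Hw.
have Hpos := Hcomp w.
rewrite /induced_order -/C subr_gt0 ltz_nat in Hpos.
set I := [set e | ((ends e).1 \in C) && ((ends e).2 \in C)] in Hpos.
have HsC := sum_deg ends C.
have A1 : \sum_(e in I) 2 <= \sum_e cnt ends C e.
  apply: leq_trans (_ : \sum_(e in I) cnt ends C e <= _).
    by apply: leq_sum => e; rewrite inE /cnt => /andP[-> ->].
  by rewrite [X in _ <= X](bigID (fun e => e \in I)) /= leq_addr.
have A2 : \sum_(v in C) deg ends v <= \sum_(v in C) 2.
  by apply: leq_sum => v /HCW; apply: Hdeg.
rewrite !sum_nat_const in A1 A2.
lia.
Qed.
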